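(* Let $d>d_*=\frac{\sqrt[4]{27}}{4}$ and let $\kappa$ be a positive, non-constant solution, defined on its maximal interval, of the equation $$\kappa^{3/4}\frac{d^2}{ds^2}\Big(\frac{1}{\kappa^{3/4}}\Big)-3\kappa^2+1=0$$ satisfying the first integral $$\kappa_s^2=\tfrac{16}{9}\kappa^2\big(16\,d\,\kappa^{3/2}-9\kappa^2-1\big).$$ Then $\kappa$ is defined on all of $\mathbb R$ and is periodic.
   Context: This equation is the Euler–Lagrange equation (with $c=1$) of the functional $\Theta(\gamma)=\int_\gamma\kappa^{1/4}\,ds$ on curves in $\mathbb S^2$, where $s$ is arc length and $\kappa$ the geodesic curvature; it governs the curvature of the profile curve of a rotational biconservative surface in $\mathbb S^3$ with nowhere-vanishing gradient of the mean curvature. *)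

(* Defs.v *)
From Stdlib Require Import Reals.
From Coquelicot Require Import Coquelicot.
Open Scope R_scope.

Definition d_star : R := Rpower 27 (1/4) / 4.

Definition in_int (a b : Rbar) (s : R) : Prop := Rbar_lt a s /\ Rbar_lt s b.

Definition is_sol (d : R) (a b : Rbar) (k : R -> R) : Prop :=
  Rbar_lt a b /\
  forall s, in_int a b s ->
    0 < k s /\
    ex_derive k s /\
    ex_derive (Derive k) s /\
    Rpower (k s) (3/4) * Derive_n (fun x => Rpower (k x) (-(3/4))) 2 s
      - 3 * (k s)^2 + 1 = 0 /\
    (Derive k s)^2 =
      16/9 * (k s)^2 * (16 * d * Rpower (k s) (3/2) - 9 * (k s)^2 - 1).

Definition maximal_sol (d : R) (a b : Rbar) (k : R -> R) : Prop :=
  is_sol d a b k /\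
  forall (a' b' : Rbar) (k' : R -> R),
    Rbar_le a' a -> Rbar_le b b' -> is_sol d a' b' k' ->
    (forall s, in_int a b s -> k' s = k s) ->
    a' = a /\ b' = b.

Definition nonconstant_on (a b : Rbar) (k : R -> R) : Prop :=
  exists s t, in_int a b s /\ in_int a b t /\ k s <> k t.

(* Main.v *)
Require Import Defs.
From Stdlib Require Import Reals Lra Psatz Ranalysis5.
From Coquelicot Require Import Coquelicot.
Require Import Defs.
Open Scope R_scope.
Definition cc (w1 w2 : R) := (w1 + w2) / 2.
Definition rr (w1 w2 : R) := (w2 - w1) / 2.
Definition Wf (w1 w2 x : R) := cc w1 w2 - rr w1 w2 * cos x.
Definition Qp (w1 w2 y : R) := y ^ 2 + (w1 + w2) * y + ((w1 + w2) ^ 2 - w1 * w2).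
Definition Ff (w1 w2 x : R) := 2 / 3 * sqrt (Qp w1 w2 (Wf w1 w2 x)) / Wf w1 w2 x.
Definition Vf (w1 w2 x : R) := rr w1 w2 * sin x * Ff w1 w2 x.
Definition dFf (w1 w2 x : R) :=
  2 / 3 * ((2 * Wf w1 w2 x + (w1 + w2)) * (rr w1 w2 * sin x)
             / (2 * sqrt (Qp w1 w2 (Wf w1 w2 x))) * Wf w1 w2 x
           - sqrt (Qp w1 w2 (Wf w1 w2 x)) * (rr w1 w2 * sin x))
      / (Wf w1 w2 x) ^ 2.
Definition dVf (w1 w2 x : R) :=
  rr w1 w2 * cos x * Ff w1 w2 x + rr w1 w2 * sin x * dFf w1 w2 x.

Lemma Wf_bounds w1 w2 x : w1 < w2 -> w1 <= Wf w1 w2 x <= w2.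
Proof.
  intros H. unfold Wf, cc, rr. pose proof (COS_bound x). nra.
Qed.

Lemma Wf_pos w1 w2 x : 0 < w1 < w2 -> 0 < Wf w1 w2 x.
Proof. intros [H1 H2]. pose proof (Wf_bounds w1 w2 x H2). lra. Qed.

Lemma Qp_pos w1 w2 y : 0 < w1 -> 0 < w2 -> 0 < y -> 0 < Qp w1 w2 y.
Proof. intros. unfold Qp. nra. Qed.

Lemma Ff_pos w1 w2 x : 0 < w1 < w2 -> 0 < Ff w1 w2 x.
Proof.
  intros H. pose proof (Wf_pos w1 w2 x H).
  assert (0 < Qp w1 w2 (Wf w1 w2 x)) by (apply Qp_pos; lra).
  unfold Ff. apply Rdiv_lt_0_compat; [|lra].
  apply Rmult_lt_0_compat; [lra|]. apply sqrt_lt_R0; lra.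
Qed.

Lemma is_derive_Wf w1 w2 x : is_derive (Wf w1 w2) x (rr w1 w2 * sin x).
Proof. unfold Wf. auto_derive; auto. ring. Qed.

Lemma is_derive_Ff w1 w2 x : 0 < w1 < w2 -> is_derive (Ff w1 w2) x (dFf w1 w2 x).
Proof.
  intros H. pose proof (Wf_pos w1 w2 x H).
  assert (0 < Qp w1 w2 (Wf w1 w2 x)) by (apply Qp_pos; lra).
  unfold Ff, dFf, Qp in *. unfold Wf in *. auto_derive.
  - split; [lra|]. split; [|auto]. lra.
  - repeat match goal with |- context [sqrt ?a] =>
      lazymatch a with Qp _ _ _ => fail | _ =>
      let E := fresh in
      assert (E : a = Qp w1 w2 (Wf w1 w2 x)) by (unfold Qp, Wf; ring); rewrite E; clear E end end.
    fold (Wf w1 w2 x) in *.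
    assert (0 < sqrt (Qp w1 w2 (Wf w1 w2 x))) by (apply sqrt_lt_R0; unfold Qp; lra).
    set (S := sqrt (Qp w1 w2 (Wf w1 w2 x))) in *.
    set (W := Wf w1 w2 x) in *.
    replace (cc w1 w2 + - (rr w1 w2 * cos x)) with W by (unfold W, Wf; ring).
    replace (cc w1 w2 - (rr w1 w2 * cos x)) with W by (unfold W, Wf; ring).
    field. lra.
Qed.

Lemma Ff_sq w1 w2 x : 0 < w1 < w2 ->
  Ff w1 w2 x ^ 2 = 4/9 * Qp w1 w2 (Wf w1 w2 x) / Wf w1 w2 x ^ 2.
Proof.
  intros H. pose proof (Wf_pos w1 w2 x H).
  assert (0 < Qp w1 w2 (Wf w1 w2 x)) by (apply Qp_pos; lra).
  unfold Ff. set (W := Wf w1 w2 x) in *. set (Q := Qp w1 w2 W) in *.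
  replace ((2/3 * sqrt Q / W)^2) with (4/9*(sqrt Q * sqrt Q)/W^2) by (field; lra).
  rewrite sqrt_sqrt by lra. reflexivity.
Qed.

Lemma Ff_dFf w1 w2 x : 0 < w1 < w2 ->
  Ff w1 w2 x * dFf w1 w2 x = 4/9 * (rr w1 w2 * sin x) *
     ((2 * Wf w1 w2 x + (w1 + w2)) * Wf w1 w2 x / 2 - Qp w1 w2 (Wf w1 w2 x)) / Wf w1 w2 x ^ 3.
Proof.
  intros H. pose proof (Wf_pos w1 w2 x H).
  assert (0 < Qp w1 w2 (Wf w1 w2 x)) by (apply Qp_pos; lra).
  assert (0 < sqrt (Qp w1 w2 (Wf w1 w2 x))) by (apply sqrt_lt_R0; lra).
  pose proof (sqrt_sqrt (Qp w1 w2 (Wf w1 w2 x)) ltac:(lra)).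
  unfold Ff, dFf. set (W := Wf w1 w2 x) in *. set (Q := Qp w1 w2 W) in *.
  set (S := sqrt Q) in *. clearbody S. rewrite <- H3. field; repeat split; lra.
Qed.

Lemma A_identity w1 w2 x :
  (rr w1 w2 * sin x) ^ 2 = (Wf w1 w2 x - w1) * (w2 - Wf w1 w2 x).
Proof.
  pose proof (sin2_cos2 x). unfold Rsqr in H.
  replace ((rr w1 w2 * sin x) ^ 2) with (rr w1 w2 ^ 2 * (sin x * sin x)) by ring.
  replace (sin x * sin x) with (1 - cos x * cos x) by lra.
  unfold Wf, cc, rr. field.
Qed.

Lemma Vf_energy w1 w2 x : 0 < w1 < w2 ->
  Vf w1 w2 x ^ 2 * Wf w1 w2 x ^ 2 =
  4/9 * ((Wf w1 w2 x - w1) * (w2 - Wf w1 w2 x)) * Qp w1 w2 (Wf w1 w2 x).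
Proof.
  intros H. pose proof (Wf_pos w1 w2 x H).
  unfold Vf. rewrite Rpow_mult_distr, Ff_sq by auto. rewrite <- A_identity.
  field. lra.
Qed.

Lemma Vf_acc w1 w2 x : 0 < w1 < w2 ->
  w1 * w2 * ((w1 + w2) ^ 2 - w1 * w2) = 9 ->
  3/4 * Vf w1 w2 x ^ 2 + 3/2 * Wf w1 w2 x * (dVf w1 w2 x * Ff w1 w2 x)
  = 3 / Wf w1 w2 x ^ 2 - Wf w1 w2 x ^ 2.
Proof.
  intros H Hb. pose proof (Wf_pos w1 w2 x H).
  assert (E1 : dVf w1 w2 x * Ff w1 w2 x =
     rr w1 w2 * cos x * Ff w1 w2 x ^ 2 + rr w1 w2 * sin x * (Ff w1 w2 x * dFf w1 w2 x))
    by (unfold dVf; ring).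
  rewrite E1, Ff_dFf, Ff_sq by auto.
  unfold Vf. rewrite Rpow_mult_distr, Ff_sq by auto.
  replace (rr w1 w2 * sin x * (4 / 9 * (rr w1 w2 * sin x) *
      ((2 * Wf w1 w2 x + (w1 + w2)) * Wf w1 w2 x / 2 - Qp w1 w2 (Wf w1 w2 x)) /
      Wf w1 w2 x ^ 3)) with ((rr w1 w2 * sin x)^2 * (4 / 9 *
      ((2 * Wf w1 w2 x + (w1 + w2)) * Wf w1 w2 x / 2 - Qp w1 w2 (Wf w1 w2 x)) /
      Wf w1 w2 x ^ 3)) by (field; lra).
  rewrite A_identity.
  replace (rr w1 w2 * cos x) with (cc w1 w2 - Wf w1 w2 x) by (unfold Wf; ring).
  set (W := Wf w1 w2 x) in *.
  replace (3 / W^2) with ((w1*w2*((w1+w2)^2-w1*w2))/3/W^2) by (rewrite Hb; field; lra).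
  unfold cc, Qp. field. lra.
Qed.

Lemma AQ_poly w1 w2 d y : 0 < w1 < w2 ->
  w1 * w2 * ((w1 + w2) ^ 2 - w1 * w2) = 9 ->
  (w1 + w2) * ((w1 + w2) ^ 2 - 2 * w1 * w2) = 16 * d ->
  (y - w1) * (w2 - y) * Qp w1 w2 y = 16 * d * y - y ^ 4 - 9.
Proof.
  intros H Hb Ha. rewrite <- Hb, <- Ha. unfold Qp. ring.
Qed.
Definition Gh (h : R -> R) (x : R) := RInt h 0 x.

Lemma Gh_derive h x : (forall y, continuous h y) -> is_derive (Gh h) x (h x).
Proof.
  intros Hc. apply (is_derive_RInt h (Gh h) 0 x); [|apply Hc].
  apply filter_forall. intros y. unfold Gh. apply (RInt_correct h 0 y).
  apply ex_RInt_continuous. intros; apply Hc.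
Qed.

Lemma Gh_cont h x : (forall y, continuous h y) -> continuity_pt (Gh h) x.
Proof.
  intros Hc. apply continuity_pt_filterlim. apply (ex_derive_continuous (Gh h)).
  eexists. apply Gh_derive; auto.
Qed.

Lemma Gh_mvt h m x y : (forall y, continuous h y) -> (forall y, m <= h y) -> x <= y ->
  m * (y - x) <= Gh h y - Gh h x.
Proof.
  intros Hc Hm Hxy.
  destruct (MVT_gen (Gh h) x y h) as [c [Hc1 Hc2]].
  - intros; apply Gh_derive; auto.
  - intros; apply Gh_cont; auto.
  - rewrite Hc2. apply Rmult_le_compat_r; [lra|apply Hm].
Qed.

Lemma Gh_incr h m x y : (forall y, continuous h y) -> (forall y, m <= h y) -> 0 < m -> x < y ->
  Gh h x < Gh h y.
Proof.
  intros Hc Hm Hm0 Hxy. pose proof (Gh_mvt h m x y Hc Hm ltac:(lra)). nra.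
Qed.

Lemma Gh_0 h : Gh h 0 = 0.
Proof. unfold Gh. rewrite RInt_point. reflexivity. Qed.

Lemma Gh_surj h m s : (forall y, continuous h y) -> (forall y, m <= h y) -> 0 < m ->
  {x | Gh h x = s}.
Proof.
  intros Hc Hm Hm0.
  set (L := (Rabs s + 1) / m).
  assert (HL : 0 < L) by (unfold L; apply Rdiv_lt_0_compat; [pose proof (Rabs_pos s)|]; lra).
  assert (H1 : Gh h L >= Rabs s + 1).
  { pose proof (Gh_mvt h m 0 L Hc Hm ltac:(lra)). rewrite Gh_0 in H.
    unfold L in *. replace (m * ((Rabs s + 1) / m - 0)) with (Rabs s + 1) in H by (field; lra). lra. }
  assert (H2 : Gh h (-L) <= - (Rabs s + 1)).
  { pose proof (Gh_mvt h m (-L) 0 Hc Hm ltac:(lra)). rewrite Gh_0 in H.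
    unfold L in *. replace (m * (0 - - ((Rabs s + 1) / m))) with (Rabs s + 1) in H by (field; lra). lra. }
  destruct (IVT (fun x => Gh h x - s) (-L) L) as [z [_ Hz]].
  - intros x. apply continuity_pt_minus; [apply Gh_cont; auto|apply continuity_pt_const; intros ??; auto].
  - lra.
  - pose proof (Rle_abs s). pose proof (Rle_abs (-s)). rewrite Rabs_Ropp in H0. lra.
  - pose proof (Rle_abs s). lra.
  - exists z. lra.
Qed.

Definition Inv h m (Hc : forall y, continuous h y) (Hm : forall y, m <= h y) (Hm0 : 0 < m) (s : R) : R :=
  proj1_sig (Gh_surj h m s Hc Hm Hm0).

Lemma Inv_spec h m Hc Hm Hm0 s : Gh h (Inv h m Hc Hm Hm0 s) = s.
Proof. unfold Inv. destruct (Gh_surj h m s Hc Hm Hm0). auto. Qed.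

Lemma Gh_inj h m x y : (forall y, continuous h y) -> (forall y, m <= h y) -> 0 < m ->
  Gh h x = Gh h y -> x = y.
Proof.
  intros Hc Hm Hm0 E. destruct (Rtotal_order x y) as [H|[H|H]]; auto.
  - pose proof (Gh_incr h m x y Hc Hm Hm0 H). lra.
  - pose proof (Gh_incr h m y x Hc Hm Hm0 H). lra.
Qed.

Lemma Inv_Gh h m Hc Hm Hm0 x : Inv h m Hc Hm Hm0 (Gh h x) = x.
Proof.
  apply (Gh_inj h m _ _ Hc Hm Hm0). apply Inv_spec.
Qed.

Lemma Inv_derive h m Hc Hm Hm0 s :
  is_derive (Inv h m Hc Hm Hm0) s (/ h (Inv h m Hc Hm Hm0 s)).
Proof.
  set (g := Inv h m Hc Hm Hm0). set (f := Gh h).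
  assert (Hfg : forall x, comp f g x = id x) by (intros; apply Inv_spec).
  assert (Hgf : forall x, g (f x) = x) by (intros; apply Inv_Gh).
  assert (Hincr : forall x y, x < y -> f x < f y) by (intros; apply (Gh_incr h m); auto).
  assert (Hginc : forall x y, x <= y -> g x <= g y).
  { intros x y Hxy. destruct (Rle_lt_dec (g x) (g y)) as [H|H]; auto.
    apply Hincr in H. pose proof (Hfg x). pose proof (Hfg y). unfold comp, id in *. lra. }
  assert (Hder : forall a, derivable_pt f a).
  { intros a. exists (h a). apply is_derive_Reals. apply Gh_derive; auto. }
  assert (Hcont : continuity_pt g s).
  { apply (continuity_pt_recip_interv f g (g s - 1) (g s + 1)); try lra.
    - intros; apply Hincr; auto.
    - intros; apply Hfg.
    - intros x H1 H2. rewrite <- (Hgf (g s - 1)), <- (Hgf (g s + 1)). split; apply Hginc; auto.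
    - intros; apply Gh_cont; auto.
    - pose proof (Hfg s) as H; unfold comp, id in H.
      pose proof (Hincr (g s - 1) (g s) ltac:(lra)).
      pose proof (Hincr (g s) (g s + 1) ltac:(lra)). lra. }
  apply is_derive_Reals.
  assert (Hpi : g (s - 1) <= g s <= g (s + 1)) by (split; apply Hginc; lra).
  pose proof (derivable_pt_lim_recip_interv f g (s - 1) (s + 1) s (fun a _ => Hder a) Hcont
    ltac:(lra) ltac:(lra) Hpi ltac:(intros; apply Hfg)) as HH.
  assert (E : derive_pt f (g s) (Hder (g s)) = h (g s)).
  { apply derive_pt_eq_0. apply is_derive_Reals. apply Gh_derive; auto. }
  cbv beta in HH. rewrite E in HH. assert (0 < h (g s)) by (pose proof (Hm (g s)); lra).
  replace (/ h (g s)) with (1 / h (g s)) by (field; lra). apply HH. lra.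
Qed.

Lemma Gh_period h p x : (forall y, continuous h y) -> (forall y, h (y + p) = h y) ->
  Gh h (x + p) = Gh h x + Gh h p.
Proof.
  intros Hc Hp. unfold Gh.
  assert (Ex : forall a b, ex_RInt h a b) by (intros; apply (@ex_RInt_continuous R_CompleteNormedModule); intros; apply Hc).
  rewrite <- (RInt_Chasles h 0 p (x + p)) by auto.
  pose proof (RInt_comp_lin h 1 p 0 x) as E.
  replace (1 * 0 + p) with p in E by ring. replace (1 * x + p) with (x + p) in E by ring.
  rewrite <- E by auto.
  rewrite (RInt_ext (fun y => scal 1 (h (1 * y + p))) h).
  - rewrite Rplus_comm. reflexivity.
  - intros y _. change (scal 1 (h (1 * y + p))) with (1 * h (1 * y + p)). rewrite Rmult_1_l. replace (1 * y + p) with (y + p) by ring. apply Hp.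
Qed.

Lemma Inv_period h m Hc Hm Hm0 p s : (forall y, h (y + p) = h y) ->
  Inv h m Hc Hm Hm0 (s + Gh h p) = Inv h m Hc Hm Hm0 s + p.
Proof.
  intros Hp. apply (Gh_inj h m _ _ Hc Hm Hm0).
  rewrite Inv_spec, Gh_period, Inv_spec; auto.
Qed.

Lemma exp_nln q n : 0 < q -> exp (INR n * ln q) = q ^ n.
Proof. intros. rewrite <- Rpower_pow by auto. reflexivity. Qed.

Lemma exp_mnln q n : 0 < q -> exp (- INR n * ln q) = / q ^ n.
Proof.
  intros. rewrite <- Rpower_pow by auto. unfold Rpower.
  rewrite <- exp_Ropp. f_equal. ring.
Qed.

Lemma Rpow_z4 z y : 0 < z -> Rpower (/ (z ^ 2) ^ 2) y = exp (- (4 * y) * ln z).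
Proof.
  intros Hz. unfold Rpower. f_equal.
  rewrite ln_Rinv by (apply pow_lt; apply pow_lt; auto).
  rewrite <- pow_mult. rewrite ln_pow by auto. simpl. ring.
Qed.

Definition Fmax w1 w2 := 2 / 3 * sqrt (Qp w1 w2 w2) / w1.

Lemma Ff_le w1 w2 x : 0 < w1 < w2 -> Ff w1 w2 x <= Fmax w1 w2.
Proof.
  intros H. pose proof (Wf_bounds w1 w2 x (proj2 H)).
  pose proof (Wf_pos w1 w2 x H).
  unfold Ff, Fmax. set (W := Wf w1 w2 x) in *.
  assert (Qp w1 w2 W <= Qp w1 w2 w2) by (unfold Qp; nra).
  assert (sqrt (Qp w1 w2 W) <= sqrt (Qp w1 w2 w2)) by (apply sqrt_le_1_alt; auto).
  assert (0 <= sqrt (Qp w1 w2 W)) by apply sqrt_pos.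
  unfold Rdiv. apply Rmult_le_compat; try lra.
  - apply Rlt_le, Rinv_0_lt_compat; lra.
  - apply Rinv_le_contravar; lra.
Qed.

Lemma Fmax_pos w1 w2 : 0 < w1 < w2 -> 0 < Fmax w1 w2.
Proof. intros H. pose proof (Ff_pos w1 w2 0 H). pose proof (Ff_le w1 w2 0 H). lra. Qed.

Definition hF w1 w2 (t : R) := / Ff w1 w2 t.

Lemma hF_cont w1 w2 (H : 0 < w1 < w2) : forall y, continuous (hF w1 w2) y.
Proof.
  intros y. apply (ex_derive_continuous (hF w1 w2)). eexists.
  apply is_derive_inv. apply is_derive_Ff; auto. apply Rgt_not_eq, Ff_pos; auto.
Qed.

Lemma hF_lb w1 w2 (H : 0 < w1 < w2) : forall y, / Fmax w1 w2 <= hF w1 w2 y.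
Proof.
  intros y. unfold hF. apply Rinv_le_contravar. apply Ff_pos; auto. apply Ff_le; auto.
Qed.

Lemma hF_m w1 w2 (H : 0 < w1 < w2) : 0 < / Fmax w1 w2.
Proof. apply Rinv_0_lt_compat, Fmax_pos; auto. Qed.

Definition Phi w1 w2 (H : 0 < w1 < w2) :=
  Inv (hF w1 w2) (/ Fmax w1 w2) (hF_cont w1 w2 H) (hF_lb w1 w2 H) (hF_m w1 w2 H).

Lemma Phi_derive w1 w2 H s : is_derive (Phi w1 w2 H) s (Ff w1 w2 (Phi w1 w2 H s)).
Proof.
  pose proof (Inv_derive (hF w1 w2) _ (hF_cont w1 w2 H) (hF_lb w1 w2 H) (hF_m w1 w2 H) s) as D.
  fold (Phi w1 w2 H) in D. unfold hF in D. rewrite Rinv_inv in D. exact D.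
Qed.

Lemma Ff_period w1 w2 y : Ff w1 w2 (y + 2 * PI) = Ff w1 w2 y.
Proof.
  unfold Ff, Wf. replace (y + 2 * PI) with (y + 2 * INR 1 * PI) by (simpl; ring).
  rewrite cos_period. reflexivity.
Qed.

Definition Tper w1 w2 := Gh (hF w1 w2) (2 * PI).

Lemma Tper_pos w1 w2 : 0 < w1 < w2 -> 0 < Tper w1 w2.
Proof.
  intros H. unfold Tper. rewrite <- (Gh_0 (hF w1 w2)).
  apply (Gh_incr _ _ _ _ (hF_cont w1 w2 H) (hF_lb w1 w2 H) (hF_m w1 w2 H)).
  pose proof PI_RGT_0. lra.
Qed.

Lemma Phi_period w1 w2 H s : Phi w1 w2 H (s + Tper w1 w2) = Phi w1 w2 H s + 2 * PI.
Proof.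
  unfold Phi, Tper. apply Inv_period. intros y. unfold hF. rewrite Ff_period. reflexivity.
Qed.

Lemma Phi_Gh w1 w2 H x : Phi w1 w2 H (Gh (hF w1 w2) x) = x.
Proof. unfold Phi. apply Inv_Gh. Qed.

Lemma D_eq (f : R -> R) (x l l' : R) : is_derive f x l -> l = l' -> is_derive f x l'.
Proof. intros H E; subst; auto. Qed.

Lemma D_comp (f g : R -> R) x df dg : is_derive f (g x) df -> is_derive g x dg ->
  is_derive (fun y => f (g y)) x (dg * df).
Proof. intros H1 H2. exact (is_derive_comp f g x df dg H1 H2). Qed.

Lemma D_mul (f g : R -> R) x df dg : is_derive f x df -> is_derive g x dg ->
  is_derive (fun y => f y * g y) x (df * g x + f x * dg).
Proof. intros H1 H2. exact (is_derive_mult f g x df dg H1 H2 Rmult_comm). Qed.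

Lemma D_inv (f : R -> R) x df : is_derive f x df -> f x <> 0 ->
  is_derive (fun y => / f y) x (- df / f x ^ 2).
Proof. apply is_derive_inv. Qed.

Lemma is_derive_Vf w1 w2 x : 0 < w1 < w2 -> is_derive (Vf w1 w2) x (dVf w1 w2 x).
Proof.
  intros H. unfold Vf, dVf.
  apply (D_eq _ _ ((rr w1 w2 * cos x) * Ff w1 w2 x + (rr w1 w2 * sin x) * dFf w1 w2 x)); [|ring].
  apply (D_mul (fun y => rr w1 w2 * sin y) (Ff w1 w2)).
  - auto_derive; auto. ring.
  - apply is_derive_Ff; auto.
Qed.


Definition Wc w1 w2 (psi : R -> R) s := Wf w1 w2 (psi s).
Definition kc w1 w2 (psi : R -> R) s := / (Wc w1 w2 psi s) ^ 2.
Definition zc w1 w2 (psi : R -> R) s := sqrt (Wc w1 w2 psi s).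
Definition uc w1 w2 psi s := zc w1 w2 psi s ^ 3.
Definition duc w1 w2 psi s := 3 / 2 * zc w1 w2 psi s * Vf w1 w2 (psi s).
Definition gU (u : R) := 3 * Rpower u (-(5/3)) - u.

Lemma Wc_pos w1 w2 psi s : 0 < w1 < w2 -> 0 < Wc w1 w2 psi s.
Proof. intros; apply Wf_pos; auto. Qed.

Lemma zc_pos w1 w2 psi s : 0 < w1 < w2 -> 0 < zc w1 w2 psi s.
Proof. intros; apply sqrt_lt_R0, Wc_pos; auto. Qed.

Lemma zc_sq w1 w2 psi s : 0 < w1 < w2 -> zc w1 w2 psi s ^ 2 = Wc w1 w2 psi s.
Proof. intros H. unfold zc. apply pow2_sqrt. pose proof (Wc_pos w1 w2 psi s H); lra. Qed.

Lemma D_Wc w1 w2 psi s : (forall t, is_derive psi t (Ff w1 w2 (psi t))) ->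
  is_derive (Wc w1 w2 psi) s (Vf w1 w2 (psi s)).
Proof.
  intros Hp. unfold Wc, Vf.
  apply (D_eq _ _ (Ff w1 w2 (psi s) * (rr w1 w2 * sin (psi s)))); [|ring].
  apply (D_comp (Wf w1 w2) psi). apply is_derive_Wf. apply Hp.
Qed.

Lemma D_V w1 w2 psi s : 0 < w1 < w2 -> (forall t, is_derive psi t (Ff w1 w2 (psi t))) ->
  is_derive (fun t => Vf w1 w2 (psi t)) s (dVf w1 w2 (psi s) * Ff w1 w2 (psi s)).
Proof.
  intros H Hp. apply (D_eq _ _ (Ff w1 w2 (psi s) * dVf w1 w2 (psi s))); [|ring].
  apply (D_comp (Vf w1 w2) psi). apply is_derive_Vf; auto. apply Hp.
Qed.

Lemma D_zc w1 w2 psi s : 0 < w1 < w2 -> (forall t, is_derive psi t (Ff w1 w2 (psi t))) ->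
  is_derive (zc w1 w2 psi) s (Vf w1 w2 (psi s) / (2 * zc w1 w2 psi s)).
Proof.
  intros H Hp. unfold zc. apply is_derive_sqrt. apply D_Wc; auto. apply Wc_pos; auto.
Qed.

Lemma D_uc w1 w2 psi s : 0 < w1 < w2 -> (forall t, is_derive psi t (Ff w1 w2 (psi t))) ->
  is_derive (uc w1 w2 psi) s (duc w1 w2 psi s).
Proof.
  intros H Hp. unfold uc, duc. pose proof (zc_pos w1 w2 psi s H).
  eapply D_eq. apply is_derive_pow. apply D_zc; auto. simpl. field. lra.
Qed.

Lemma gU_z z : 0 < z -> gU (z ^ 3) = 3 / z ^ 5 - z ^ 3.
Proof.
  intros Hz. unfold gU, Rpower. rewrite ln_pow by auto.
  replace (- (5 / 3) * (INR 3 * ln z)) with (- INR 5 * ln z) by (simpl; field).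
  rewrite exp_mnln by auto. field. lra.
Qed.

Lemma D_duc w1 w2 psi s : 0 < w1 < w2 -> w1 * w2 * ((w1 + w2) ^ 2 - w1 * w2) = 9 ->
  (forall t, is_derive psi t (Ff w1 w2 (psi t))) ->
  is_derive (duc w1 w2 psi) s (gU (uc w1 w2 psi s)).
Proof.
  intros H Hb Hp. unfold duc, uc. pose proof (zc_pos w1 w2 psi s H).
  rewrite gU_z by auto.
  eapply D_eq.
  { apply (D_mul (fun t => 3 / 2 * zc w1 w2 psi t) (fun t => Vf w1 w2 (psi t))).
    - apply is_derive_scal. apply D_zc; auto.
    - apply D_V; auto. }
  pose proof (Vf_acc w1 w2 (psi s) H Hb) as E.
  pose proof (zc_sq w1 w2 psi s H) as Z. unfold Wc in Z. rewrite <- Z in E.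
  set (z := zc w1 w2 psi s) in *. set (V := Vf w1 w2 (psi s)) in *.
  set (A := dVf w1 w2 (psi s) * Ff w1 w2 (psi s)) in *.
  apply (Rmult_eq_reg_l z); [|lra].
  replace (z * (3 / 2 * (V / (2 * z)) * V + 3 / 2 * z * A))
     with (3 / 4 * V ^ 2 + 3 / 2 * z ^ 2 * A) by (field; lra).
  rewrite E. field. lra.
Qed.

Definition dkc w1 w2 psi s := -2 * Vf w1 w2 (psi s) / Wc w1 w2 psi s ^ 3.

Lemma D_kc w1 w2 psi s : 0 < w1 < w2 -> (forall t, is_derive psi t (Ff w1 w2 (psi t))) ->
  is_derive (kc w1 w2 psi) s (dkc w1 w2 psi s).
Proof.
  intros H Hp. unfold kc, dkc. pose proof (Wc_pos w1 w2 psi s H).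
  eapply D_eq. apply D_inv. apply is_derive_pow. apply D_Wc; auto.
  apply pow_nonzero; lra. simpl. field. lra.
Qed.

Lemma kc_z w1 w2 psi s : 0 < w1 < w2 -> kc w1 w2 psi s = / (zc w1 w2 psi s ^ 2) ^ 2.
Proof. intros H. unfold kc. rewrite zc_sq; auto. Qed.

Lemma uc_Rpower w1 w2 psi s : 0 < w1 < w2 ->
  Rpower (kc w1 w2 psi s) (-(3/4)) = uc w1 w2 psi s.
Proof.
  intros H. rewrite kc_z by auto. pose proof (zc_pos w1 w2 psi s H).
  rewrite Rpow_z4 by auto. unfold uc.
  replace (- (4 * - (3 / 4)) * ln (zc w1 w2 psi s)) with (INR 3 * ln (zc w1 w2 psi s)) by (simpl; field).
  apply exp_nln; auto.
Qed.

Lemma kc_sol w1 w2 d psi : 0 < w1 < w2 ->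
  w1 * w2 * ((w1 + w2) ^ 2 - w1 * w2) = 9 ->
  (w1 + w2) * ((w1 + w2) ^ 2 - 2 * w1 * w2) = 16 * d ->
  (forall t, is_derive psi t (Ff w1 w2 (psi t))) ->
  is_sol d m_infty p_infty (kc w1 w2 psi).
Proof.
  intros H Hb Ha Hp. split; [simpl; auto|]. intros s _.
  pose proof (Wc_pos w1 w2 psi s H) as HW.
  pose proof (zc_pos w1 w2 psi s H) as Hz.
  assert (HDk : forall t, Derive (kc w1 w2 psi) t = dkc w1 w2 psi t)
    by (intros; apply is_derive_unique, D_kc; auto).
  split; [unfold kc; apply Rinv_0_lt_compat, pow_lt; auto|].
  split; [eexists; apply D_kc; auto|].
  split.
  { apply (ex_derive_ext (dkc w1 w2 psi)); [intros; rewrite HDk; auto|].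
    unfold dkc. eexists.
    apply (D_mul (fun t => -2 * Vf w1 w2 (psi t)) (fun t => / Wc w1 w2 psi t ^ 3)).
    - apply is_derive_scal. apply D_V; auto.
    - apply D_inv. apply is_derive_pow. apply D_Wc; auto. apply pow_nonzero; lra. }
  split.
  { rewrite (Derive_n_ext _ (uc w1 w2 psi)) by (intros; apply uc_Rpower; auto).
    change (Derive_n (uc w1 w2 psi) 2 s) with (Derive (Derive (uc w1 w2 psi)) s).
    rewrite (Derive_ext (Derive (uc w1 w2 psi)) (duc w1 w2 psi))
      by (intros; apply is_derive_unique, D_uc; auto).
    rewrite (is_derive_unique _ _ _ (D_duc w1 w2 psi s H Hb Hp)).
    unfold uc. rewrite gU_z by auto. rewrite kc_z by auto.
    rewrite Rpow_z4 by auto.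
    replace (- (4 * (3 / 4)) * ln (zc w1 w2 psi s)) with (- INR 3 * ln (zc w1 w2 psi s)) by (simpl; field).
    rewrite exp_mnln by auto. field. lra. }
  { rewrite HDk. unfold dkc. rewrite kc_z by auto. rewrite Rpow_z4 by auto.
    replace (- (4 * (3 / 2)) * ln (zc w1 w2 psi s)) with (- INR 6 * ln (zc w1 w2 psi s)) by (simpl; field).
    rewrite exp_mnln by auto.
    pose proof (Vf_energy w1 w2 (psi s) H) as E.
    rewrite Rmult_assoc, (AQ_poly w1 w2 d) in E by auto.
    pose proof (zc_sq w1 w2 psi s H) as Z. unfold Wc in *. rewrite <- Z in E |- *.
    set (z := zc w1 w2 psi s) in *. set (V := Vf w1 w2 (psi s)) in *.
    replace ((-2 * V / (z ^ 2) ^ 3) ^ 2) with (4 * (V ^ 2 * (z ^ 2) ^ 2) / z ^ 16) by (field; lra).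
    rewrite E. field. lra. }
Qed.
Lemma D_cont (f : R -> R) x l : is_derive f x l -> continuity_pt f x.
Proof. intros H. apply derivable_continuous_pt. exists l. apply is_derive_Reals. auto. Qed.

Lemma lip_of_deriv (g dg : R -> R) :
  (forall x, 0 < x -> is_derive g x (dg x)) -> (forall x, 0 < x -> continuity_pt dg x) ->
  forall m M, 0 < m -> exists L, 0 <= L /\ forall x y, m <= x <= M -> m <= y <= M ->
    Rabs (g x - g y) <= L * Rabs (x - y).
Proof.
  intros Hd Hc m M Hm.
  destruct (Rle_lt_dec m M) as [HmM|HmM].
  2:{ exists 0. split; [lra|]. intros. lra. }
  destruct (continuity_ab_maj (fun t => Rabs (dg t)) m M HmM) as [Mx [HMx HMx2]].
  { intros c Hc'. apply continuity_pt_comp with (f1 := dg) (f2 := Rabs).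
    apply Hc; lra. apply Rcontinuity_abs. }
  exists (Rabs (dg Mx)). split; [apply Rabs_pos|].
  intros x y Hx Hy.
  destruct (MVT_gen g y x dg) as [c [Hc1 Hc2]].
  - intros z Hz. apply Hd. pose proof (Rmin_glb y x m). lra.
  - intros z Hz. apply (D_cont g z (dg z)). apply Hd.
    assert (m <= Rmin y x) by (apply Rmin_glb; lra). lra.
  - rewrite Hc2, Rabs_mult. apply Rmult_le_compat_r; [apply Rabs_pos|].
    apply HMx. split.
    + assert (m <= Rmin y x) by (apply Rmin_glb; lra). lra.
    + assert (Rmax y x <= M) by (apply Rmax_lub; lra). lra.
Qed.

Definition LipPos (g : R -> R) := forall m M, 0 < m -> exists L, 0 <= L /\
  forall x y, m <= x <= M -> m <= y <= M -> Rabs (g x - g y) <= L * Rabs (x - y).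

Definition SolOn (g : R -> R) (y1 y2 dy1 dy2 : R -> R) (t : R) :=
  0 < y1 t /\ 0 < y2 t /\ is_derive y1 t (dy1 t) /\ is_derive y2 t (dy2 t) /\
  is_derive dy1 t (g (y1 t)) /\ is_derive dy2 t (g (y2 t)).

Lemma uniq_fwd g y1 y2 dy1 dy2 s0 s1 : LipPos g ->
  (forall t, s0 <= t <= s1 -> SolOn g y1 y2 dy1 dy2 t) ->
  y1 s0 = y2 s0 -> dy1 s0 = dy2 s0 -> forall t, s0 <= t <= s1 -> y1 t = y2 t.
Proof.
  intros HL Hs E0 E1 t Ht.
  assert (Hss : s0 <= s1) by lra.
  assert (C1 : forall t, s0 <= t <= s1 -> continuity_pt y1 t)
    by (intros u Hu; destruct (Hs u Hu) as (?&?&?&?&?&?); eapply D_cont; eauto).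
  assert (C2 : forall t, s0 <= t <= s1 -> continuity_pt y2 t)
    by (intros u Hu; destruct (Hs u Hu) as (?&?&?&?&?&?); eapply D_cont; eauto).
  destruct (continuity_ab_min y1 s0 s1 Hss C1) as [a1 [Ha1 Ha1']].
  destruct (continuity_ab_min y2 s0 s1 Hss C2) as [a2 [Ha2 Ha2']].
  destruct (continuity_ab_maj y1 s0 s1 Hss C1) as [b1 [Hb1 Hb1']].
  destruct (continuity_ab_maj y2 s0 s1 Hss C2) as [b2 [Hb2 Hb2']].
  set (m := Rmin (y1 a1) (y2 a2)). set (M := Rmax (y1 b1) (y2 b2)).
  assert (Hm : 0 < m).
  { unfold m. destruct (Hs a1 Ha1') as (?&_). destruct (Hs a2 Ha2') as (_&?&_).
    apply Rmin_glb_lt; auto. }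
  destruct (HL m M Hm) as [L [HL0 HLip]].
  assert (Hrange : forall u, s0 <= u <= s1 -> m <= y1 u <= M /\ m <= y2 u <= M).
  { intros u Hu. pose proof (Ha1 u Hu). pose proof (Ha2 u Hu). pose proof (Hb1 u Hu).
    pose proof (Hb2 u Hu). pose proof (Rmin_l (y1 a1) (y2 a2)). pose proof (Rmin_r (y1 a1) (y2 a2)).
    pose proof (Rmax_l (y1 b1) (y2 b2)). pose proof (Rmax_r (y1 b1) (y2 b2)). unfold m, M. lra. }
  set (C := 1 + L).
  set (e := fun u => (y1 u - y2 u) ^ 2 + (dy1 u - dy2 u) ^ 2).
  set (de := fun u => 2 * (y1 u - y2 u) * (dy1 u - dy2 u)
                      + 2 * (dy1 u - dy2 u) * (g (y1 u) - g (y2 u))).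
  assert (He0 : forall u, 0 <= e u) by (intros; unfold e; apply Rplus_le_le_0_compat; apply pow2_ge_0).
  assert (Hde : forall u, s0 <= u <= s1 -> is_derive e u (de u)).
  { intros u Hu. destruct (Hs u Hu) as (_&_&D1&D2&D3&D4). unfold e, de.
    eapply D_eq.
    - apply (is_derive_plus (fun u => (y1 u - y2 u) ^ 2) (fun u => (dy1 u - dy2 u) ^ 2)).
      + apply is_derive_pow. apply (is_derive_minus y1 y2); eauto.
      + apply is_derive_pow. apply (is_derive_minus dy1 dy2); eauto.
    - simpl. change minus with Rminus. change plus with Rplus. simpl. ring. }
  assert (Hdele : forall u, s0 <= u <= s1 -> de u <= C * e u).
  { intros u Hu. destruct (Hrange u Hu) as [R1 R2].
    pose proof (HLip _ _ R1 R2) as Hl. unfold de, e, C.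
    set (a := y1 u - y2 u) in *. set (b := dy1 u - dy2 u) in *.
    set (q := g (y1 u) - g (y2 u)) in *.
    assert (b * q <= Rabs b * Rabs q) by (rewrite <- Rabs_mult; apply Rle_abs).
    assert (Rabs b * Rabs q <= Rabs b * (L * Rabs a)) by (apply Rmult_le_compat_l; auto; apply Rabs_pos).
    assert (2 * Rabs a * Rabs b <= a ^ 2 + b ^ 2).
    { pose proof (pow2_abs a). pose proof (pow2_abs b).
      pose proof (pow2_ge_0 (Rabs a - Rabs b)). nra. }
    assert (2 * a * b <= a ^ 2 + b ^ 2) by (pose proof (pow2_ge_0 (a - b)); nra).
    assert (L * (2 * Rabs a * Rabs b) <= L * (a ^ 2 + b ^ 2)) by (apply Rmult_le_compat_l; auto).
    nra. }
  set (dl := / (2 * C)).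
  assert (HC : 0 < C) by (unfold C; lra).
  assert (Hdl : 0 < dl) by (unfold dl; apply Rinv_0_lt_compat; lra).
  assert (Step : forall t0, s0 <= t0 <= s1 -> e t0 = 0 ->
            forall u, t0 <= u <= Rmin (t0 + dl) s1 -> e u = 0).
  { intros t0 Ht0 Et0 u Hu.
    set (t1 := Rmin (t0 + dl) s1).
    assert (Ht1 : t0 <= t1) by (unfold t1; apply Rmin_glb; lra).
    assert (Ht1' : t1 <= s1) by apply Rmin_r.
    assert (Ht1'' : t1 <= t0 + dl) by apply Rmin_l.
    destruct (continuity_ab_maj e t0 t1 Ht1) as [tm [Htm Htm']].
    { intros c Hc. apply (D_cont e c (de c)). apply Hde. lra. }
    assert (Hall : forall v, t0 <= v <= t1 -> e v <= e tm / 2).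
    { intros v Hv. destruct (MVT_gen e t0 v de) as [c [Hc1 Hc2]].
      - intros z Hz. apply Hde. rewrite Rmin_left, Rmax_right in Hz by lra. lra.
      - intros z Hz. apply (D_cont e z (de z)). apply Hde.
        rewrite Rmin_left, Rmax_right in Hz by lra. lra.
      - rewrite Rmin_left, Rmax_right in Hc1 by lra.
        rewrite Et0 in Hc2.
        assert (de c <= C * e c) by (apply Hdele; lra).
        assert (e c <= e tm) by (apply Htm; lra).
        assert (0 <= v - t0 <= dl) by lra.
        assert (e v = de c * (v - t0)) by lra.
        assert (de c * (v - t0) <= C * e tm * dl).
        { destruct (Rle_lt_dec (de c) 0).
          - assert (0 <= C * e tm * dl) by (pose proof (He0 tm); apply Rmult_le_pos; [nra|lra]). nra.
          - apply Rle_trans with (de c * dl); [apply Rmult_le_compat_l; lra|].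
            apply Rmult_le_compat_r; [lra|]. nra. }
        replace (C * e tm * dl) with (e tm / 2) in * by (unfold dl; field; lra). lra. }
    pose proof (Hall tm Htm'). pose proof (He0 tm). pose proof (Hall u Hu). pose proof (He0 u). lra. }
  assert (Ind : forall n, forall u, s0 <= u <= Rmin (s0 + INR n * dl) s1 -> e u = 0).
  { induction n as [|n IH].
    - intros u Hu. simpl in Hu. rewrite Rmult_0_l, Rplus_0_r in Hu.
      assert (u = s0) by (pose proof (Rmin_l s0 s1); lra). subst u.
      unfold e. rewrite E0, E1. ring.
    - intros u Hu. set (t0 := Rmin (s0 + INR n * dl) s1) in *.
      assert (Ht0 : s0 <= t0 <= s1).
      { split; [unfold t0; apply Rmin_glb; [|]; try lra|apply Rmin_r].
        pose proof (pos_INR n); nra. }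
      assert (Et0 : e t0 = 0) by (apply IH; lra).
      destruct (Rle_lt_dec u t0) as [Hut|Hut]; [apply IH; lra|].
      apply (Step t0 Ht0 Et0). split; [lra|].
      rewrite S_INR in Hu.
      unfold t0 in *. destruct (Rle_lt_dec (s0 + INR n * dl) s1) as [Hc|Hc].
      + rewrite (Rmin_left (s0 + INR n * dl)) in Hut |- * by lra.
        replace (s0 + INR n * dl + dl) with (s0 + (INR n + 1) * dl) by ring. lra.
      + rewrite (Rmin_right (s0 + INR n * dl)) in Hut by lra. pose proof (Rmin_r (s0 + (INR n + 1) * dl) s1). lra. }
  destruct (INR_unbounded ((s1 - s0) / dl)) as [n Hn].
  assert (Hu : s0 <= t <= Rmin (s0 + INR n * dl) s1).
  { split; [lra|]. apply Rmin_glb; [|lra].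
    assert (INR n * dl > s1 - s0).
    { apply (Rmult_gt_compat_r dl) in Hn; auto. unfold Rdiv in Hn.
      rewrite Rmult_assoc, Rinv_l, Rmult_1_r in Hn by lra. lra. }
    lra. }
  pose proof (Ind n t Hu). unfold e in H.
  assert ((y1 t - y2 t) ^ 2 = 0) by (pose proof (pow2_ge_0 (y1 t - y2 t)); pose proof (pow2_ge_0 (dy1 t - dy2 t)); lra).
  destruct (Req_dec (y1 t - y2 t) 0) as [Z|Z]; [lra|]. exfalso. apply (pow_nonzero _ 2 Z). auto.
Qed.

Lemma D_refl (f : R -> R) t l : is_derive f (- t) l -> is_derive (fun u => f (- u)) t (- l).
Proof.
  intros H. eapply D_eq. apply (D_comp f (fun u => - u)). apply H.
  auto_derive; auto. ring.
Qed.

Lemma D_refl_opp (f : R -> R) t l : is_derive f (- t) l -> is_derive (fun u => - f (- u)) t l.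
Proof.
  intros H. pose proof (is_derive_opp _ _ _ (D_refl f t l H)) as H2.
  eapply D_eq. apply (is_derive_ext _ _ _ _ (fun u => eq_refl) H2). change opp with Ropp. simpl. ring.
Qed.

Lemma uniq_bwd g y1 y2 dy1 dy2 s0 s1 : LipPos g ->
  (forall t, s1 <= t <= s0 -> SolOn g y1 y2 dy1 dy2 t) ->
  y1 s0 = y2 s0 -> dy1 s0 = dy2 s0 -> forall t, s1 <= t <= s0 -> y1 t = y2 t.
Proof.
  intros HL Hs E0 E1 t Ht.
  pose proof (uniq_fwd g (fun u => y1 (-u)) (fun u => y2 (-u)) (fun u => - dy1 (-u))
    (fun u => - dy2 (-u)) (-s0) (-s1) HL) as U.
  replace t with (- - t) by ring. apply U.
  - intros u Hu. destruct (Hs (-u) ltac:(lra)) as (P1&P2&D1&D2&D3&D4).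
    refine (conj _ (conj _ (conj _ (conj _ (conj _ _))))); auto.
    + apply D_refl; auto.
    + apply D_refl; auto.
    + apply D_refl_opp; auto.
    + apply D_refl_opp; auto.
  - rewrite Ropp_involutive. auto.
  - rewrite Ropp_involutive, E1. auto.
  - lra.
Qed.

Lemma gU_lip : LipPos gU.
Proof.
  intros m M Hm.
  apply (lip_of_deriv gU (fun x => -5 * exp (-(8/3) * ln x) - 1)); auto.
  - intros x Hx. unfold gU, Rpower. auto_derive; [lra|].
    replace (-(8/3) * ln x) with (-(5/3) * ln x + - ln x) by field.
    rewrite exp_plus, exp_Ropp, exp_ln by lra. field. lra.
  - intros x Hx. apply (D_cont _ x (-5 * (exp (-(8/3) * ln x) * (-(8/3) / x)))).
    auto_derive; [lra|]. field. lra.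
Qed.

Lemma int_between a b s0 t u : in_int a b s0 -> in_int a b t ->
  Rmin s0 t <= u <= Rmax s0 t -> in_int a b u.
Proof.
  intros [H1 H2] [H3 H4] Hu. split.
  - destruct (Rle_dec s0 t).
    + rewrite Rmin_left in Hu by lra. apply (Rbar_lt_le_trans a s0 u); auto. simpl. lra.
    + rewrite Rmin_right in Hu by lra. apply (Rbar_lt_le_trans a t u); auto. simpl. lra.
  - destruct (Rle_dec s0 t).
    + rewrite Rmax_right in Hu by lra. apply (Rbar_le_lt_trans u t b); auto. simpl. lra.
    + rewrite Rmax_left in Hu by lra. apply (Rbar_le_lt_trans u s0 b); auto. simpl. lra.
Qed.

Lemma uniq_int g a b y1 y2 dy1 dy2 s0 : LipPos g ->
  (forall t, in_int a b t -> SolOn g y1 y2 dy1 dy2 t) ->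
  in_int a b s0 -> y1 s0 = y2 s0 -> dy1 s0 = dy2 s0 ->
  forall t, in_int a b t -> y1 t = y2 t.
Proof.
  intros HL Hs H0 E0 E1 t Ht.
  destruct (Rle_dec s0 t).
  - apply (uniq_fwd g y1 y2 dy1 dy2 s0 t HL); auto; try lra.
    intros u Hu. apply Hs. apply (int_between a b s0 t u); auto.
    rewrite Rmin_left, Rmax_right; lra.
  - apply (uniq_bwd g y1 y2 dy1 dy2 s0 t HL); auto; try lra.
    intros u Hu. apply Hs. apply (int_between a b s0 t u); auto.
    rewrite Rmin_right, Rmax_left; lra.
Qed.

Lemma locally_int a b s : in_int a b s -> locally s (fun t => in_int a b t).
Proof.
  intros [H1 H2]. apply filter_and.
  - apply (open_Rbar_gt' s a H1).
  - apply (open_Rbar_lt' s b H2).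
Qed.

Definition uk (k : R -> R) t := Rpower (k t) (-(3/4)).
Definition Ek (k : R -> R) t := exp (-(3/4) * ln (k t)) * (-(3/4) * (Derive k t / k t)).

Lemma Rpower_q x y : 0 < x -> Rpower x y = exp (4 * y * ln (Rpower x (1/4))).
Proof.
  intros Hx. unfold Rpower at 2. rewrite ln_exp. unfold Rpower. f_equal. field.
Qed.

Lemma given_side d a b k : is_sol d a b k ->
  forall t, in_int a b t ->
    0 < uk k t /\ is_derive (uk k) t (Derive (uk k) t) /\
    is_derive (Derive (uk k)) t (gU (uk k t)) /\ Derive (uk k) t = Ek k t.
Proof.
  intros [_ Hs] t Ht.
  assert (DE : forall t, in_int a b t -> is_derive (uk k) t (Ek k t)).
  { intros u Hu. destruct (Hs u Hu) as (P&D1&_).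
    unfold uk, Ek, Rpower. auto_derive; [repeat split; auto|].
    change (Derive (fun x => k x) u) with (Derive k u). field. lra. }
  assert (DU : forall t, in_int a b t -> Derive (uk k) t = Ek k t)
    by (intros; apply is_derive_unique; auto).
  destruct (Hs t Ht) as (P&D1&D2&ODE&FI).
  split; [unfold uk, Rpower; apply exp_pos|].
  split; [rewrite DU by auto; auto|].
  split; [|apply DU; auto].
  assert (EX : ex_derive (Derive (uk k)) t).
  { apply (ex_derive_ext_loc (Ek k)).
    - apply (filter_imp (fun u => in_int a b u)); [|apply locally_int; auto].
      intros u Hu. symmetry. apply DU. auto.
    - unfold Ek. auto_derive. repeat split; auto; lra. }
  destruct EX as [l Hl].
  replace (gU (uk k t)) with l; auto.
  apply is_derive_unique in Hl.
  change (Derive (Derive (uk k)) t) with (Derive_n (uk k) 2 t) in Hl.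
  unfold uk in Hl. rewrite <- Hl.
  assert (Hq : 0 < Rpower (k t) (1/4)) by apply exp_pos.
  set (q := Rpower (k t) (1/4)) in *.
  assert (Kq : k t = q ^ 4).
  { rewrite <- (Rpower_1 (k t)) at 1 by auto. rewrite Rpower_q by auto. fold q.
    replace (4 * 1) with (INR 4) by (simpl; ring). apply exp_nln; auto. }
  rewrite (Rpower_q (k t) (3/4)) in ODE by auto. fold q in ODE.
  replace (4 * (3/4)) with (INR 3) in ODE by (simpl; field). rewrite exp_nln in ODE by auto.
  unfold gU, uk. rewrite (Rpower_q (k t) (-(3/4))) by auto. fold q.
  replace (4 * -(3/4) * ln q) with (- INR 3 * ln q) by (simpl; field). rewrite exp_mnln by auto.
  replace (Rpower (/ q ^ 3) (- (5 / 3))) with (q ^ 5).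
  2:{ unfold Rpower. rewrite ln_Rinv by (apply pow_lt; auto). rewrite ln_pow by auto.
      replace (- (5 / 3) * - (INR 3 * ln q)) with (INR 5 * ln q) by (simpl; field).
      rewrite exp_nln by auto. reflexivity. }
  rewrite Kq in ODE.
  apply (Rmult_eq_reg_l (q ^ 3)); [|apply pow_nonzero; lra].
  replace (q ^ 3 * Derive_n (fun x : R => Rpower (k x) (- (3 / 4))) 2 t)
    with (3 * (q ^ 4) ^ 2 - 1) by lra.
  field. lra.
Qed.

Lemma w0_prop d : d_star < d ->
  0 < Rpower 3 (1/4) /\ 16 * d * Rpower 3 (1/4) - Rpower 3 (1/4) ^ 4 - 9 > 0.
Proof.
  intros Hd. unfold d_star in Hd.
  assert (H3 : 0 < Rpower 3 (1/4)) by apply exp_pos.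
  assert (H27 : 0 < Rpower 27 (1/4)) by apply exp_pos.
  assert (E4 : Rpower 3 (1/4) ^ 4 = 3).
  { rewrite <- Rpower_pow by auto. rewrite Rpower_mult. replace (1/4 * INR 4) with 1 by (simpl; field).
    apply Rpower_1; lra. }
  assert (E : Rpower 27 (1/4) * Rpower 3 (1/4) = 3).
  { rewrite Rpower_mult_distr by lra. replace (27 * 3) with (3 ^ 4) by ring.
    rewrite <- (Rpower_pow 4 3) by lra. rewrite Rpower_mult. replace (INR 4 * (1/4)) with 1 by (simpl; field).
    apply Rpower_1; lra. }
  split; auto. rewrite E4.
  assert (16 * d * Rpower 3 (1/4) > 4 * Rpower 27 (1/4) * Rpower 3 (1/4)).
  { assert (4 * Rpower 27 (1/4) < 16 * d) by lra. nra. }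
  lra.
Qed.

Lemma roots d : d_star < d -> exists w1 w2, 0 < w1 < w2 /\
  w1 * w2 * ((w1 + w2) ^ 2 - w1 * w2) = 9 /\
  (w1 + w2) * ((w1 + w2) ^ 2 - 2 * w1 * w2) = 16 * d.
Proof.
  intros Hd. destruct (w0_prop d Hd) as [Hw0 Pw0].
  set (w0 := Rpower 3 (1/4)) in *.
  set (P := fun x => 16 * d * x - x ^ 4 - 9).
  assert (HdP : 0 < d).
  { assert (0 < d_star) by (unfold d_star; apply Rdiv_lt_0_compat; [apply exp_pos|lra]). lra. }
  assert (CP : continuity P).
  { intros x. apply (D_cont P x (16 * d - 4 * x ^ 3)). unfold P. auto_derive; auto. ring. }
  destruct (IVT P 0 w0 CP Hw0) as [w1 [Hw1 E1]]; [unfold P; lra|unfold P in *; lra|].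
  set (X := 16 * d + w0 + 1).
  assert (PX : P X < 0).
  { unfold P. assert (1 <= X) by (unfold X; lra).
    assert (16 * d * X < X * X) by (apply Rmult_lt_compat_r; unfold X in *; lra).
    assert (X * X <= X ^ 4).
    { replace (X ^ 4) with ((X * X) * (X * X)) by ring.
      assert (1 <= X * X) by nra. nra. }
    lra. }
  destruct (IVT (fun x => - P x) w0 X) as [w2 [Hw2 E2]].
  - intros x. apply continuity_pt_opp. apply CP.
  - unfold X; lra.
  - unfold P in *; lra.
  - lra.
  - assert (w1 <> 0) by (intro; subst; unfold P in E1; lra).
    assert (w1 <> w0) by (intro; subst; unfold P in *; lra).
    assert (w2 <> w0) by (intro; subst; unfold P in *; lra).
    assert (E2' : P w2 = 0) by lra.
    unfold P in E1, E2'.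
    exists w1, w2. split; [lra|]. split.
    + apply (Rmult_eq_reg_l (w1 - w2)); [|lra].
      transitivity (w1 * (16*d*w2 - w2^4) - w2*(16*d*w1 - w1^4)); [ring|].
      replace (16*d*w2 - w2^4) with 9 by lra. replace (16*d*w1 - w1^4) with 9 by lra. ring.
    + apply (Rmult_eq_reg_l (w1 - w2)); [|lra].
      transitivity (w1 ^ 4 - w2 ^ 4); [ring|].
      replace (w1 ^ 4) with (16*d*w1 - 9) by lra. replace (w2 ^ 4) with (16*d*w2 - 9) by lra. ring.
Qed.

Lemma exists_in_int a b : Rbar_lt a b -> exists s, in_int a b s.
Proof.
  destruct a as [x| |]; destruct b as [y| |]; simpl; intros H; try contradiction.
  - exists ((x + y) / 2). split; simpl; lra.
  - exists (x + 1). split; simpl; auto; lra.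
  - exists (y - 1). split; simpl; auto; lra.
  - exists 0. split; simpl; auto.
Qed.

Lemma sq_same_sign a b : a ^ 2 = b ^ 2 -> (0 <= a /\ 0 <= b) \/ (a <= 0 /\ b <= 0) -> a = b.
Proof. intros E [[H1 H2]|[H1 H2]]; nra. Qed.

Theorem mainTheorem6 (d : R) (a b : Rbar) (k : R -> R) :
  d_star < d ->
  maximal_sol d a b k ->
  nonconstant_on a b k ->
  a = m_infty /\ b = p_infty /\
  exists T : R, 0 < T /\ forall s : R, k (s + T) = k s.
Proof.
  intros Hd [Hsol Hmax] _.
  destruct (roots d Hd) as (w1 & w2 & H & Hb & Ha).
  destruct (exists_in_int a b (proj1 Hsol)) as [s0 Hs0].
  destruct (given_side d a b k Hsol s0 Hs0) as (Pu & _ & _ & DU0).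
  destruct ((proj2 Hsol) s0 Hs0) as (Pk & _ & _ & _ & FI).
  assert (Hq : 0 < Rpower (k s0) (1/4)) by apply exp_pos.
  set (q := Rpower (k s0) (1/4)) in *.
  assert (Kq : k s0 = q ^ 4).
  { rewrite <- (Rpower_1 (k s0)) at 1 by auto. rewrite Rpower_q by auto. fold q.
    replace (4 * 1) with (INR 4) by (simpl; ring). apply exp_nln; auto. }
  rewrite (Rpower_q (k s0) (3/2)) in FI by auto. fold q in FI.
  replace (4 * (3/2)) with (INR 6) in FI by (simpl; field). rewrite exp_nln in FI by auto.
  rewrite Kq in FI.
  set (w0 := / q ^ 2).
  assert (Hw0 : 0 < w0) by (unfold w0; apply Rinv_0_lt_compat, pow_lt; auto).
  set (kd := Derive k s0) in *.
  assert (Pw0 : 16 * d * w0 - w0 ^ 4 - 9 = 9 / 16 * (kd / q ^ 8) ^ 2 ).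
  { replace ((kd / q ^ 8) ^ 2) with (kd ^ 2 / q ^ 16) by (field; lra). unfold w0. rewrite FI. field. lra. }
  assert (Pw0' : 0 <= (w0 - w1) * (w2 - w0) * Qp w1 w2 w0).
  { rewrite (AQ_poly w1 w2 d) by auto. rewrite Pw0.
    apply Rmult_le_pos; [lra|apply pow2_ge_0]. }
  assert (HQ : 0 < Qp w1 w2 w0) by (apply Qp_pos; lra).
  assert (Hr : 0 <= (w0 - w1) * (w2 - w0)).
  { destruct (Rle_lt_dec 0 ((w0 - w1) * (w2 - w0))); auto. nra. }
  assert (Hw0r : w1 <= w0 <= w2) by nra.
  assert (Hrr : 0 < rr w1 w2) by (unfold rr; lra).
  set (x := (cc w1 w2 - w0) / rr w1 w2).
  assert (Hx : -1 <= x <= 1).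
  { unfold x, cc, rr in *. split.
    - apply (Rmult_le_reg_r ((w2 - w1) / 2)); [lra|]. unfold Rdiv at 1. field_simplify; lra.
    - apply (Rmult_le_reg_r ((w2 - w1) / 2)); [lra|]. unfold Rdiv at 1. field_simplify; lra. }
  set (phi0 := if Rle_dec kd 0 then acos x else - acos x).
  assert (HW : Wf w1 w2 phi0 = w0).
  { unfold Wf, phi0. destruct (Rle_dec kd 0); [|rewrite cos_neg]; rewrite cos_acos by auto;
    unfold x; field; lra. }
  assert (HV : Vf w1 w2 phi0 = - (1/2) * kd / q ^ 6).
  { apply sq_same_sign.
    - pose proof (Vf_energy w1 w2 phi0 H) as E. rewrite HW in E.
      rewrite Rmult_assoc, (AQ_poly w1 w2 d), Pw0 in E by auto.
      apply (Rmult_eq_reg_r (w0 ^ 2)); [|apply pow_nonzero; lra]. rewrite E.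
      unfold w0. field. lra.
    - pose proof (Ff_pos w1 w2 phi0 H). unfold Vf, phi0 in *.
      destruct (Rle_dec kd 0) as [Hk|Hk].
      + left. rewrite sin_acos by auto. split.
        * apply Rmult_le_pos; [|lra]. apply Rmult_le_pos; [lra|apply sqrt_pos].
        * assert (0 <= - kd / q ^ 6) by (apply Rdiv_le_0_compat; [lra|apply pow_lt; auto]).
          replace (- (1/2) * kd / q ^ 6) with (1/2 * (- kd / q ^ 6)) by (field; lra). lra.
      + right. rewrite sin_neg, sin_acos by auto. split.
        * pose proof (sqrt_pos (1 - x²)). 
          replace (rr w1 w2 * - sqrt (1 - x²) * Ff w1 w2 (- acos x))
            with (- (rr w1 w2 * sqrt (1 - x²) * Ff w1 w2 (- acos x))) by ring.
          assert (0 <= rr w1 w2 * sqrt (1 - x²) * Ff w1 w2 (- acos x)); [|lra].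
          apply Rmult_le_pos; [apply Rmult_le_pos|]; lra.
        * assert (0 <= kd / q ^ 6) by (apply Rdiv_le_0_compat; [lra|apply pow_lt; auto]).
          replace (- (1/2) * kd / q ^ 6) with (- (1/2 * (kd / q ^ 6))) by (field; lra). lra. }
  set (h := Gh (hF w1 w2) phi0 - s0).
  set (psi := fun s => Phi w1 w2 H (s + h)).
  assert (Hpsi : forall t, is_derive psi t (Ff w1 w2 (psi t))).
  { intros t. unfold psi. eapply D_eq.
    - apply (D_comp (Phi w1 w2 H) (fun s => s + h)). apply Phi_derive.
      auto_derive; auto.
    - ring. }
  assert (Hpsi0 : psi s0 = phi0).
  { unfold psi, h. rewrite Rplus_comm. unfold Rminus. rewrite Rplus_assoc, Rplus_opp_l, Rplus_0_r.
    apply Phi_Gh. }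
  assert (EQ : forall t, in_int a b t -> uk k t = uc w1 w2 psi t).
  { apply (uniq_int gU a b (uk k) (uc w1 w2 psi) (Derive (uk k)) (duc w1 w2 psi) s0 gU_lip); auto.
    - intros t Ht. destruct (given_side d a b k Hsol t Ht) as (P1 & D1 & D2 & _).
      refine (conj P1 (conj _ (conj D1 (conj _ (conj D2 _))))).
      + unfold uc. apply pow_lt, zc_pos; auto.
      + apply D_uc; auto.
      + apply D_duc; auto.
    - unfold uk, uc, zc, Wc. rewrite Hpsi0, HW.
      rewrite (Rpower_q (k s0)) by auto. fold q.
      replace (4 * - (3/4) * ln q) with (- INR 3 * ln q) by (simpl; field).
      rewrite exp_mnln by auto. unfold w0.
      replace (/ q ^ 2) with ((/ q) ^ 2) by (field; lra).
      rewrite sqrt_pow2 by (apply Rlt_le, Rinv_0_lt_compat; auto). field. lra.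
    - rewrite DU0. unfold Ek, duc, zc, Wc. rewrite Hpsi0, HW, HV.
      unfold w0. replace (/ q ^ 2) with ((/ q) ^ 2) by (field; lra).
      rewrite sqrt_pow2 by (apply Rlt_le, Rinv_0_lt_compat; auto).
      fold kd. rewrite Kq.
      replace (exp (- (3 / 4) * ln (q ^ 4))) with (/ q ^ 3).
      + field. lra.
      + rewrite ln_pow by auto. replace (- (3 / 4) * (INR 4 * ln q)) with (- INR 3 * ln q) by (simpl; field).
        rewrite exp_mnln; auto. }
  assert (EQk : forall t, in_int a b t -> k t = kc w1 w2 psi t).
  { intros t Ht. pose proof (EQ t Ht) as E. unfold uk in E. rewrite <- uc_Rpower in E by auto.
    destruct ((proj2 Hsol) t Ht) as (Pkt & _).
    assert (0 < kc w1 w2 psi t) by (unfold kc; apply Rinv_0_lt_compat, pow_lt, Wc_pos; auto).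
    apply (f_equal (fun y => Rpower y (-(4/3)))) in E.
    rewrite !Rpower_mult in E. replace (- (3 / 4) * - (4 / 3)) with 1 in E by field.
    rewrite !Rpower_1 in E by auto. exact E. }
  destruct (Hmax m_infty p_infty (kc w1 w2 psi)) as [Ea Eb].
  - destruct a; simpl; auto.
  - destruct b; simpl; auto.
  - apply (kc_sol w1 w2 d psi H Hb Ha Hpsi).
  - intros t Ht. symmetry. apply EQk. auto.
  - subst a b. split; [auto|]. split; [auto|].
    exists (Tper w1 w2). split; [apply Tper_pos; auto|].
    intros s. rewrite !EQk by (split; simpl; auto).
    unfold kc, Wc, psi. replace (s + Tper w1 w2 + h) with (s + h + Tper w1 w2) by ring.
    rewrite Phi_period. unfold Wf.
    replace (Phi w1 w2 H (s + h) + 2 * PI) with (Phi w1 w2 H (s + h) + 2 * INR 1 * PI) by (simpl; ring).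
    rewrite cos_period. reflexivity.
Qed.
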